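(* Let $\gamma>0$ and consider the closed-loop system $$\dot x_1(t)=x_2(t),\qquad \dot x_2(t)=u(t),$$ with the control $$u(t)=-\gamma\,\mathrm{sign}\bigl(x_1(t)\bigr)-\delta(t),\qquad \delta(t)=\begin{cases}|x_2(t)|\,|x_1(t)|^{-1}x_2(t) & \text{if } x_1(t)x_2(t)<0,\\ 0 & \text{otherwise.}\end{cases}$$ Suppose the initial state $x(0)=(x_1(0),x_2(0))$ satisfies $x_1(0)>0$, $x_1(0)x_2(0)<0$ and $x_2^2(0)<2\gamma|x_1(0)|$. Then the solution (while it remains in the fourth quadrant $\{x_1>0,\ x_2<0\}$) is given by $$x_1(t)=-\frac{\gamma}{\omega^2}\cos(\omega t+\phi)+B,\qquad x_2(t)=\frac{\gamma}{\omega}\sin(\omega t+\phi),$$ where $$B=\frac{\gamma\,x_1^2(0)}{2\gamma\,x_1(0)-x_2^2(0)},\qquad \phi=\pi+\arccos\Bigl(1-\frac{x_2^2(0)}{\gamma\,x_1(0)}\Bigr),\qquad \omega=\sqrt{\frac{\gamma}{B}}.$$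
   Context: This is the unperturbed case of a second-order system (double integrator) under a quasi-continuous feedback control. $\mathrm{sign}$ denotes the sign function; $\arccos$ takes values in $[0,\pi]$. *)

(* Defs.v *)
From Stdlib Require Export Reals Lra.
Open Scope R_scope.

Definition sgn (x : R) : R :=
  if Rlt_dec 0 x then 1 else if Rlt_dec x 0 then -1 else 0.

Definition delta (x1 x2 : R) : R :=
  if Rlt_dec (x1 * x2) 0 then Rabs x2 * / Rabs x1 * x2 else 0.

Definition ctrl (gamma x1 x2 : R) : R := - gamma * sgn x1 - delta x1 x2.

(* constants of the closed-form solution, from initial state (a, b) = x(0) *)
Definition B_of (gamma a b : R) : R := gamma * a ^ 2 / (2 * gamma * a - b ^ 2).
Definition phi_of (gamma a b : R) : R := PI + acos (1 - b ^ 2 / (gamma * a)).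
Definition omega_of (gamma a b : R) : R := sqrt (gamma / B_of gamma a b).

Definition sol1 (gamma a b t : R) : R :=
  - gamma / (omega_of gamma a b) ^ 2 * cos (omega_of gamma a b * t + phi_of gamma a b)
  + B_of gamma a b.
Definition sol2 (gamma a b t : R) : R :=
  gamma / omega_of gamma a b * sin (omega_of gamma a b * t + phi_of gamma a b).

(* Main.v *)
Require Import Defs.
From Stdlib Require Import Reals Lra Psatz.
Open Scope R_scope.

Lemma dp_l f x l l' : derivable_pt_lim f x l -> l = l' -> derivable_pt_lim f x l'.
Proof. intros H ->; exact H. Qed.
Lemma dp_plus f g x l1 l2 : derivable_pt_lim f x l1 -> derivable_pt_lim g x l2 ->
  derivable_pt_lim (fun t => f t + g t) x (l1 + l2).
Proof. intros; exact (derivable_pt_lim_plus f g x l1 l2 H H0). Qed.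
Lemma dp_minus f g x l1 l2 : derivable_pt_lim f x l1 -> derivable_pt_lim g x l2 ->
  derivable_pt_lim (fun t => f t - g t) x (l1 - l2).
Proof. intros; exact (derivable_pt_lim_minus f g x l1 l2 H H0). Qed.
Lemma dp_mult f g x l1 l2 : derivable_pt_lim f x l1 -> derivable_pt_lim g x l2 ->
  derivable_pt_lim (fun t => f t * g t) x (l1 * g x + f x * l2).
Proof. intros; exact (derivable_pt_lim_mult f g x l1 l2 H H0). Qed.
Lemma dp_const c x : derivable_pt_lim (fun _ => c) x 0.
Proof. exact (derivable_pt_lim_const c x). Qed.
Lemma dp_inv f x l : derivable_pt_lim f x l -> f x <> 0 ->
  derivable_pt_lim (fun t => / f t) x (- l / (f x * f x)).
Proof.
  intros H Hn.
  pose proof (derivable_pt_lim_div (fct_cte 1) f x 0 l (derivable_pt_lim_const 1 x) H Hn) as H2.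
  eapply derivable_pt_lim_ext in H2.
  - eapply dp_l; [exact H2|]. unfold fct_cte, Rsqr; field; auto.
  - intro z; unfold div_fct, fct_cte; simpl; unfold Rdiv; ring.
Qed.
Lemma dp_lin w p x : derivable_pt_lim (fun t => w * t + p) x w.
Proof.
  eapply dp_l. apply dp_plus. apply dp_mult. apply dp_const.
  apply derivable_pt_lim_id. apply dp_const. unfold id; ring.
Qed.
Lemma dp_cos w p x : derivable_pt_lim (fun t => cos (w * t + p)) x (- sin (w * x + p) * w).
Proof.
  exact (derivable_pt_lim_comp (fun t => w * t + p) cos x w _ (dp_lin w p x)
     (derivable_pt_lim_cos _)).
Qed.
Lemma dp_sin w p x : derivable_pt_lim (fun t => sin (w * t + p)) x (cos (w * x + p) * w).
Proof.
  exact (derivable_pt_lim_comp (fun t => w * t + p) sin x w _ (dp_lin w p x)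
     (derivable_pt_lim_sin _)).
Qed.

Lemma lim_l f D l l' x0 : limit1_in f D l x0 -> l = l' -> limit1_in f D l' x0.
Proof. intros H ->; exact H. Qed.
Lemma lim_const c D x0 : limit1_in (fun _ => c) D c x0.
Proof.
  unfold limit1_in, limit_in; intros eps He; exists 1; split; [lra|].
  intros x _; simpl; unfold Rdist; rewrite Rminus_diag, Rabs_R0; lra.
Qed.
Lemma lim_deriv f D x0 l : derivable_pt_lim f x0 l -> limit1_in f D (f x0) x0.
Proof.
  intro H. pose proof (derivable_continuous_pt f x0 (exist _ l H)) as C.
  unfold continuity_pt, continue_in, limit1_in, limit_in in *.
  intros eps He; destruct (C eps He) as [alp [Ha H']]; exists alp; split; auto.
  intros x [Dx Hd]; destruct (Req_dec x x0) as [->|Hn].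
  - simpl; unfold Rdist; rewrite Rminus_diag, Rabs_R0; lra.
  - apply H'; split; [split; [exact I| congruence]| exact Hd].
Qed.

Lemma const0 (h : R -> R) T :
  (forall t, 0 < t < T -> derivable_pt_lim h t 0) ->
  limit1_in h (fun t => 0 < t) (h 0) 0 -> forall t, 0 <= t < T -> h t = h 0.
Proof.
  intros Hd Hl t [Ht0 HtT].
  destruct (Req_dec t 0) as [->|Hne]; [reflexivity|].
  assert (Hmid: forall s, 0 < s <= t -> h s = h t).
  { intros s [Hs1 Hs2]. destruct (Req_dec s t) as [->|]; [reflexivity|].
    destruct (MVT_cor2 h (fun _ => 0) s t) as [c [Hc _]]; [lra| |lra].
    intros c Hc; apply Hd; lra. }
  destruct (Req_dec (h t) (h 0)) as [|Hneq]; auto. exfalso.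
  destruct (Hl (Rabs (h t - h 0))) as [alp [Halp Hx]].
  { apply Rabs_pos_lt; lra. }
  set (s := Rmin alp t / 2).
  assert (H1 : Rmin alp t <= alp) by apply Rmin_l.
  assert (H2 : Rmin alp t <= t) by apply Rmin_r.
  assert (H3 : 0 < Rmin alp t) by (apply Rmin_glb_lt; lra).
  specialize (Hx s). simpl in Hx; unfold Rdist in Hx.
  rewrite Hmid in Hx by (unfold s; lra).
  assert (Rabs (s - 0) < alp) by (unfold s; rewrite Rminus_0_r, Rabs_right; lra).
  assert (Hs0 : 0 < s) by (unfold s; lra).
  specialize (Hx (conj Hs0 H)). lra.
Qed.

Lemma ctrl_q4 g x1 x2 : 0 < x1 -> x2 < 0 -> ctrl g x1 x2 = - g + x2 * x2 / x1.
Proof.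
  intros H1 H2. unfold ctrl, sgn, delta.
  destruct (Rlt_dec 0 x1); [|lra].
  destruct (Rlt_dec (x1 * x2) 0); [|nra].
  rewrite Rabs_left, Rabs_right by lra. field. lra.
Qed.
Lemma dp_opp f x l : derivable_pt_lim f x l -> derivable_pt_lim (fun t => - f t) x (- l).
Proof. intros; exact (derivable_pt_lim_opp f x l H). Qed.


Ltac dtac d1 d2 :=
  repeat first [ apply d1 | apply d2 | apply dp_const | apply dp_cos | apply dp_sin
               | apply dp_minus | apply dp_plus | apply dp_mult | apply dp_inv | apply dp_opp ].

Ltac ltl l1 l2 :=
  repeat first [ apply l1 | apply l2 | apply lim_const
               | (eapply lim_deriv; apply dp_cos) | (eapply lim_deriv; apply dp_sin)
               | apply limit_minus | apply limit_plus | apply limit_mul | apply limit_inv ].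

Theorem proposition1 (gamma a b : R) :
  0 < gamma -> 0 < a -> a * b < 0 -> b ^ 2 < 2 * gamma * Rabs a ->
  (sol1 gamma a b 0 = a /\ sol2 gamma a b 0 = b /\
   forall t, 0 <= t -> 0 < sol1 gamma a b t -> sol2 gamma a b t < 0 ->
     derivable_pt_lim (sol1 gamma a b) t (sol2 gamma a b t) /\
     derivable_pt_lim (sol2 gamma a b) t
       (ctrl gamma (sol1 gamma a b t) (sol2 gamma a b t))) /\
  (forall (T : R) (x1 x2 : R -> R),
     x1 0 = a -> x2 0 = b ->
     limit1_in x1 (fun t => 0 < t) a 0 ->
     limit1_in x2 (fun t => 0 < t) b 0 ->
     (forall t, 0 < t < T ->
        derivable_pt_lim x1 t (x2 t) /\
        derivable_pt_lim x2 t (ctrl gamma (x1 t) (x2 t))) ->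
     (forall t, 0 <= t < T -> 0 < x1 t /\ x2 t < 0) ->
     forall t, 0 <= t < T -> x1 t = sol1 gamma a b t /\ x2 t = sol2 gamma a b t).
Proof.
  intros Hg Ha Hab Hb2.
  assert (Hbn : b < 0) by nra.
  rewrite Rabs_right in Hb2 by lra.
  assert (HD : 0 < 2 * gamma * a - b ^ 2) by lra.
  remember (omega_of gamma a b) as w eqn:Hwdef.
  remember (phi_of gamma a b) as p eqn:Hpdef.
  remember (B_of gamma a b) as B eqn:HBdef.
  pose proof Hwdef as Hw0. pose proof HBdef as HB0.
  unfold omega_of in Hwdef; rewrite <- HBdef in Hwdef.
  unfold B_of in HBdef.
  assert (HB : 0 < B) by (rewrite HBdef; apply Rdiv_lt_0_compat; nra).
  assert (Hw : 0 < w) by (rewrite Hwdef; apply sqrt_lt_R0; apply Rdiv_lt_0_compat; lra).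
  assert (Hww : w * w = gamma / B) by (rewrite Hwdef; apply sqrt_sqrt; apply Rlt_le, Rdiv_lt_0_compat; lra).
  assert (Hgam : gamma = B * w * w) by (rewrite Rmult_assoc, Hww; field; lra).
  set (q := b ^ 2 / (gamma * a)).
  assert (Hq : q * (gamma * a) = b ^ 2) by (unfold q; field; lra).
  assert (Hq0 : 0 < q < 2) by (split; nra).
  set (c := 1 - q).
  assert (Hc : -1 <= c <= 1) by (unfold c; lra).
  set (s := sqrt (1 - c²)).
  assert (Hcp : cos p = - c) by (rewrite Hpdef; unfold phi_of; rewrite Rplus_comm, neg_cos, cos_acos; auto).
  assert (Hsp : sin p = - s) by (rewrite Hpdef; unfold phi_of; rewrite Rplus_comm, neg_sin, sin_acos; auto).
  assert (Hs0 : 0 <= s) by apply sqrt_pos.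
  assert (Hcs : c * c + s * s = 1).
  { unfold s; rewrite sqrt_sqrt. unfold Rsqr; ring. unfold Rsqr; nra. }
  assert (HaB : a = B * (1 + c)).
  { rewrite HBdef; unfold c, q; field; lra. }
  assert (HBg : B * gamma * (1 - c * c) = b ^ 2).
  { rewrite HBdef; unfold c, q; field; lra. }
  assert (Hbs : b = - (B * w * s)).
  { assert (E : (B * w * s) ^ 2 = b ^ 2).
    { rewrite <- HBg, Hgam. replace (1 - c * c) with (s * s) by lra. ring. }
    assert (0 <= B * w * s) by (apply Rmult_le_pos; nra). nra. }
  assert (E1 : forall t, sol1 gamma a b t = B - B * cos (w * t + p)).
  { intro t; unfold sol1; rewrite <- Hw0, <- Hpdef, <- HB0. rewrite Hgam at 1. field. lra. }
  assert (E2 : forall t, sol2 gamma a b t = B * w * sin (w * t + p)).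
  { intro t; unfold sol2; rewrite <- Hw0, <- Hpdef.
    rewrite Hgam at 1. field. lra. }
  split; [split; [|split]|].
  - rewrite E1. rewrite Rmult_0_r, Rplus_0_l, Hcp. lra.
  - rewrite E2. rewrite Rmult_0_r, Rplus_0_l, Hsp. lra.
  - intros t Ht H1 H2. split.
    + rewrite E2. apply derivable_pt_lim_ext with (f := fun t => B - B * cos (w * t + p)).
      { intro; rewrite E1; reflexivity. }
      eapply dp_l. dtac dp_const dp_const. cbv beta; ring.
    + rewrite ctrl_q4 by assumption. rewrite E1, E2.
      rewrite E1 in H1.
      apply derivable_pt_lim_ext with (f := fun t => B * w * sin (w * t + p)).
      { intro; rewrite E2; reflexivity. }
      eapply dp_l. dtac dp_const dp_const.
      set (th := w * t + p). pose proof (sin2_cos2 th) as Hsc. unfold Rsqr in Hsc.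
      replace (B * w * sin th * (B * w * sin th)) with (gamma * (1 + cos th) * (B - B * cos th)).
      2:{ rewrite Hgam. replace (B * w * sin th * (B * w * sin th)) with (B*B*w*w*(sin th * sin th)) by ring. replace (sin th * sin th) with (1 - cos th * cos th) by lra. ring. }
      assert (B - B * cos th <> 0) by (unfold th; lra). rewrite Hgam. field. auto.
  - intros T x1 x2 H10 H20 L1 L2 HDer HQ4 t Ht.
    assert (D1 : forall t, 0 < t < T -> derivable_pt_lim x1 t (x2 t)) by (intros; apply HDer; auto).
    assert (D2 : forall t, 0 < t < T -> derivable_pt_lim x2 t (- gamma + x2 t * x2 t / x1 t)).
    { intros t0 Ht0. destruct (HQ4 t0) as [h1 h2]; [lra|]. rewrite <- ctrl_q4 by auto. apply HDer; auto. }
    set (F := fun t => (2 * gamma * x1 t - x2 t * x2 t) * (/ x1 t * / x1 t)).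
    assert (HF : forall t, 0 <= t < T -> F t = F 0).
    { apply const0.
      - intros t0 Ht0. destruct (HQ4 t0) as [h1 h2]; [lra|].
        pose proof (D1 t0 Ht0) as d1. pose proof (D2 t0 Ht0) as d2.
        unfold F. eapply dp_l. dtac d1 d2. all: try lra.
        cbv beta. field. lra.
      - unfold F. eapply lim_l. ltl L1 L2. all: try lra.
        cbv beta; rewrite H10, H20; reflexivity. }
    assert (HF0 : F 0 = w * w).
    { unfold F; rewrite H10, H20, Hww, HBdef. field. split; lra. }
    assert (Hx2sq : forall t, 0 <= t < T -> x2 t * x2 t = 2 * gamma * x1 t - w * w * (x1 t * x1 t)).
    { intros t0 Ht0. destruct (HQ4 t0) as [h1 h2]; [lra|].
      pose proof (HF t0 Ht0) as Ft. rewrite HF0 in Ft. unfold F in Ft.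
      rewrite <- Ft. field. lra. }
    assert (D2' : forall t, 0 < t < T -> derivable_pt_lim x2 t (w * w * (B - x1 t))).
    { intros t0 Ht0. destruct (HQ4 t0) as [h1 h2]; [lra|].
      eapply dp_l. apply D2; auto. rewrite Hx2sq by lra. rewrite Hgam. field. lra. }
    set (P := fun t => (B - x1 t) * cos (w * t + p) + (/ w * x2 t) * sin (w * t + p)).
    set (Q := fun t => (/ w * x2 t) * cos (w * t + p) - (B - x1 t) * sin (w * t + p)).
    assert (HP : forall t, 0 <= t < T -> P t = P 0).
    { apply const0.
      - intros t0 Ht0.
        pose proof (D1 t0 Ht0) as d1. pose proof (D2' t0 Ht0) as d2.
        unfold P. eapply dp_l. dtac d1 d2.
        cbv beta. field. lra.
      - unfold P. eapply lim_l. ltl L1 L2. all: try lra.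
        cbv beta; rewrite H10, H20; reflexivity. }
    assert (HQ : forall t, 0 <= t < T -> Q t = Q 0).
    { apply const0.
      - intros t0 Ht0.
        pose proof (D1 t0 Ht0) as d1. pose proof (D2' t0 Ht0) as d2.
        unfold Q. eapply dp_l. dtac d1 d2.
        cbv beta. field. lra.
      - unfold Q. eapply lim_l. ltl L1 L2. all: try lra.
        cbv beta; rewrite H10, H20; reflexivity. }
    assert (HP0 : P 0 = B).
    { unfold P. rewrite H10, H20, Rmult_0_r, Rplus_0_l, Hcp, Hsp, HaB, Hbs.
      transitivity (B * (c * c + s * s)). field. lra. rewrite Hcs; ring. }
    assert (HQ0 : Q 0 = 0).
    { unfold Q. rewrite H10, H20, Rmult_0_r, Rplus_0_l, Hcp, Hsp, HaB, Hbs.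
      field. lra. }
    pose proof (HP t Ht) as HPt. pose proof (HQ t Ht) as HQt.
    rewrite HP0 in HPt. rewrite HQ0 in HQt. unfold P, Q in HPt, HQt.
    rewrite E1, E2.
    set (co := cos (w * t + p)) in *. set (si := sin (w * t + p)) in *.
    assert (Hcs2 : co * co + si * si = 1).
    { pose proof (sin2_cos2 (w * t + p)) as Hh. unfold Rsqr in Hh. unfold co, si. lra. }
    set (U := B - x1 t) in *. set (V := / w * x2 t) in *.
    assert (EU : U = co * (U * co + V * si) - si * (V * co - U * si)).
    { transitivity (U * (co * co + si * si)). rewrite Hcs2; ring. ring. }
    assert (EV : V = si * (U * co + V * si) + co * (V * co - U * si)).
    { transitivity (V * (co * co + si * si)). rewrite Hcs2; ring. ring. }
    rewrite HPt, HQt in EU, EV.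
    unfold U, V in EU, EV. split.
    + lra.
    + assert (x2 t = w * (/ w * x2 t)) by (field; lra). rewrite H, EV. ring.
Qed.
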